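(* Let $\{(\phi^n,\mu^n,R^n,\xi^n)\}$ be generated by Scheme 1B and set $M:=R^0=\sqrt{E[\phi_{in}]}$. Then for all $n\ge0$: $0<R^{n+1}\le R^n\le M$ and $0<\xi^{n+1}\le \frac{M}{\sqrt{c_0}}$.
   Context: Standing setup: $\Omega\subset\mathbb{R}^d$ ($d=2,3$) is a bounded domain with smooth boundary and outward unit normal $\mathbf{n}$; $\|\cdot\|_0$ is the $L^2(\Omega)$ norm. Let $\lambda\ge 0$, $H(s)=\frac14(s^2-1)^2$, $h(s)=H'(s)=s^3-s$. Fix $c_0>0$ and define $E[\phi]=\int_\Omega\big(\tfrac12|\nabla\phi|^2+\tfrac{\lambda}{2}\phi^2+H(\phi)\big)dx+c_0$ (so $E[\phi]\ge c_0$). Time step $\Delta t>0$. Set $\phi^0=\phi_{in}$, $\mu^0=-\Delta\phi^0+\lambda\phi^0+h(\phi^0)$, $R^0=\sqrt{E[\phi^0]}$, $\xi^0=1$. Scheme 1B: for $n\ge0$, solve $\frac{\phi^{n+1}-\phi^n}{\Delta t}=\Delta\mu^{n+1}$, $\mu^{n+1}=-\Delta\phi^{n+1}+\lambda\phi^{n+1}+|\xi^{n}|^2h(\phi^n)$ with $\nabla\phi^{n+1}\cdot\mathbf{n}=\nabla\mu^{n+1}\cdot\mathbf{n}=0$ on $\partial\Omega$; then $\frac{R^{n+1}-R^n}{\Delta t}=-\frac{\xi^{n+1}}{2\sqrt{E[\phi^{n+1}]}}\int_\Omega|\nabla\mu^{n+1}|^2dx$ with $\xi^{n+1}=R^{n+1}/\sqrt{E[\phi^{n+1}]}$.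 *)

(* Defs.v *)
From HB Require Import structures.
From mathcomp Require Import all_boot all_order all_algebra.
From mathcomp Require Import all_classical all_reals all_analysis.
Set Implicit Arguments. Unset Strict Implicit. Unset Printing Implicit Defensive.
Import Order.TTheory GRing.Theory Num.Theory.
Import numFieldNormedType.Exports.
Local Open Scope classical_set_scope.
Local Open Scope ring_scope.

Section Defs.
Variable R : realType.

Definition evec (d : nat) (i : 'I_d) : 'rV[R]_d := delta_mx 0 i.

Definition pd (d : nat) (i : 'I_d) (f : 'rV[R]_d -> R) : 'rV[R]_d -> R :=
  fun x => derive f x (evec i).

Fixpoint pds (d : nat) (l : seq 'I_d) (f : 'rV[R]_d -> R) : 'rV[R]_d -> R :=
  match l with [::] => f | i :: l' => pd i (pds l' f) end.

Definition grad (d : nat) (f : 'rV[R]_d -> R) (x : 'rV[R]_d) : 'rV[R]_d :=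
  \row_(i < d) pd i f x.

Definition dotv (d : nat) (u v : 'rV[R]_d) : R := \sum_(i < d) u 0 i * v 0 i.
Definition sqnorm (d : nat) (u : 'rV[R]_d) : R := dotv u u.
Definition enorm (d : nat) (u : 'rV[R]_d) : R := Num.sqrt (sqnorm u).

Definition lap (d : nat) (f : 'rV[R]_d -> R) (x : 'rV[R]_d) : R :=
  \sum_(i < d) pd i (pd i f) x.

Definition C2 (d : nat) (f : 'rV[R]_d -> R) : Prop :=
  forall x, differentiable f x /\ forall i : 'I_d, differentiable (pd i f) x.

Definition smooth (d : nat) (f : 'rV[R]_d -> R) : Prop :=
  forall (l : seq 'I_d) x, differentiable (pds l f) x.

(* Omega is a bounded domain with smooth boundary, given by a global smooth
   defining function rho : Omega = {rho < 0}, grad rho <> 0 on {rho = 0}. *)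
Definition smooth_bounded_domain (d : nat) (Omega : set 'rV[R]_d)
    (rho : 'rV[R]_d -> R) : Prop :=
  [/\ Omega = [set x | rho x < 0], smooth rho,
      (forall x, rho x = 0 -> grad rho x != 0),
      bounded_set Omega & (Omega !=set0 /\ connected Omega)].

(* outward unit normal on the boundary *)
Definition normal (d : nat) (rho : 'rV[R]_d -> R) (x : 'rV[R]_d) : 'rV[R]_d :=
  (enorm (grad rho x))^-1 *: grad rho x.

(* Lebesgue integral over R^d as an iterated integral (Tonelli), used only for
   nonnegative integrands. *)
Fixpoint iint (n : nat) : ('rV[R]_n -> \bar R) -> \bar R :=
  match n return ('rV[R]_n -> \bar R) -> \bar R with
  | 0 => fun f => f 0
  | n'.+1 => fun f =>
      (\int[@lebesgue_measure R]_(t in setT)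
         iint (fun v : 'rV[R]_n' => f (row_mx (const_mx t : 'rV[R]_1) v)))%E
  end.

(* integral over Omega of a real function (nonnegative integrands only) *)
Definition intOm (d : nat) (Omega : set 'rV[R]_d) (g : 'rV[R]_d -> R) : \bar R :=
  iint (fun x => (if x \in Omega then g x else 0)%:E).

Definition Hpot (s : R) : R := (s ^+ 2 - 1) ^+ 2 / 4.
Definition hpot (s : R) : R := s ^+ 3 - s.

Definition energy (d : nat) (Omega : set 'rV[R]_d) (lam c0 : R)
    (phi : 'rV[R]_d -> R) : R :=
  fine (intOm Omega (fun x => sqnorm (grad phi x) / 2 + lam / 2 * phi x ^+ 2
                              + Hpot (phi x))) + c0.

End Defs.

(* Main.v *)
Require Import Defs.
From HB Require Import structures.
From mathcomp Require Import all_boot all_order all_algebra.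
From mathcomp Require Import all_classical all_reals all_analysis.
Import Order.TTheory GRing.Theory Num.Theory.
Import numFieldNormedType.Exports.
Local Open Scope classical_set_scope.
Local Open Scope ring_scope.
From mathcomp Require Import ring lra.

Lemma iint_ge0 (R : realType) (n : nat) (f : 'rV[R]_n -> \bar R) :
  (forall x, (0 <= f x)%E) -> (0 <= iint f)%E.
Proof.
elim: n f => [|n IH] f Hf /=; first exact: Hf.
apply: integral_ge0 => t _; apply: IH => v; exact: Hf.
Qed.

Lemma fine_intOm_ge0 (R : realType) (d : nat) (Omega : set 'rV[R]_d) g :
  (forall x, 0 <= g x) -> 0 <= fine (intOm Omega g).
Proof.
move=> Hg; apply: fine_ge0; apply: iint_ge0 => x.
by case: ifP => _; rewrite lee_fin // Hg.
Qed.

Lemma energy_ge (R : realType) (d : nat) (Omega : set 'rV[R]_d) lam c0 phi :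
  0 <= lam -> c0 <= energy Omega lam c0 phi.
Proof.
move=> Hl; rewrite /energy lerDr; apply: fine_intOm_ge0 => x.
have h1 : 0 <= sqnorm (grad phi x).
  by rewrite /sqnorm /dotv; apply: sumr_ge0 => i _; rewrite -expr2 sqr_ge0.
have h2 : 0 <= Hpot (phi x) by rewrite /Hpot; apply: divr_ge0; [exact: sqr_ge0|].
have h3 : 0 <= lam / 2 * phi x ^+ 2 by apply: mulr_ge0; [apply: divr_ge0|exact: sqr_ge0].
by apply: addr_ge0 => //; apply: addr_ge0 => //; apply: divr_ge0.
Qed.

Theorem mainTheorem7 (R : realType) (d : nat) (Omega : set 'rV[R]_d)
  (rho : 'rV[R]_d -> R) (lam c0 dt : R) (phi_in : 'rV[R]_d -> R)
  (phi mu : nat -> 'rV[R]_d -> R) (Rs xi : nat -> R) :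
  (d = 2%N \/ d = 3%N) ->
  smooth_bounded_domain Omega rho ->
  0 <= lam -> 0 < c0 -> 0 < dt ->
  (* regularity of the iterates *)
  (forall n, C2 (phi n)) -> (forall n, C2 (mu n.+1)) ->
  (* initialization *)
  phi 0%N = phi_in ->
  (forall x, Omega x ->
     mu 0%N x = - lap (phi 0%N) x + lam * phi 0%N x + hpot (phi 0%N x)) ->
  Rs 0%N = Num.sqrt (energy Omega lam c0 (phi 0%N)) ->
  xi 0%N = 1 ->
  (* Scheme 1B *)
  (forall n x, Omega x ->
     (phi n.+1 x - phi n x) / dt = lap (mu n.+1) x) ->
  (forall n x, Omega x ->
     mu n.+1 x = - lap (phi n.+1) x + lam * phi n.+1 x
                 + xi n ^+ 2 * hpot (phi n x)) ->
  (forall n x, (closure Omega `\` Omega) x ->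
     dotv (grad (phi n.+1) x) (normal rho x) = 0 /\
     dotv (grad (mu n.+1) x) (normal rho x) = 0) ->
  (forall n,
     (Rs n.+1 - Rs n) / dt =
       - (xi n.+1 / (2 * Num.sqrt (energy Omega lam c0 (phi n.+1))))
         * fine (intOm Omega (fun x => sqnorm (grad (mu n.+1) x)))) ->
  (forall n, xi n.+1 = Rs n.+1 / Num.sqrt (energy Omega lam c0 (phi n.+1))) ->
  forall n : nat,
    let M := Rs 0%N in
    (0 < Rs n.+1 /\ Rs n.+1 <= Rs n /\ Rs n <= M) /\
    (0 < xi n.+1 /\ xi n.+1 <= M / Num.sqrt c0).
Proof.
move=> _ _ Hl Hc0 Hdt _ _ _ _ HR0 _ _ _ _ Hrec Hxi.
have sqc0 : 0 < Num.sqrt c0 by rewrite sqrtr_gt0.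
have HS : forall n, Num.sqrt c0 <= Num.sqrt (energy Omega lam c0 (phi n)).
  move=> n; have H := @energy_ge R d Omega lam c0 (phi n) Hl; rewrite ler_sqrt //; exact: le_trans (ltW Hc0) H.
have HG : forall n, 0 <= fine (intOm Omega (fun x => sqnorm (grad (mu n.+1) x))).
  move=> n; apply: fine_intOm_ge0 => x.
  by rewrite /sqnorm /dotv; apply: sumr_ge0 => i _; rewrite -expr2 sqr_ge0.
have step : forall n, 0 < Rs n -> 0 < Rs n.+1 /\ Rs n.+1 <= Rs n.
  move=> n Hn.
  have := Hrec n; rewrite Hxi.
  set S := Num.sqrt _; set G := fine _.
  have S0 : 0 < S by apply: lt_le_trans (HS n.+1).
  have G0 : 0 <= G := HG n.
  move=> E.
  have E' : Rs n.+1 * (1 + dt * G / (2 * S ^+ 2)) = Rs n.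
    have : Rs n.+1 - Rs n = - (Rs n.+1 / S / (2 * S)) * G * dt.
      by rewrite -E mulfVK // gt_eqF.
    move=> E2; apply/eqP; rewrite -subr_eq0; apply/eqP.
    have -> : Rs n.+1 * (1 + dt * G / (2 * S ^+ 2)) - Rs n =
       (Rs n.+1 - Rs n) + Rs n.+1 / S / (2 * S) * G * dt.
      by field; rewrite gt_eqF.
    by rewrite E2; ring.
  set k := dt * G / (2 * S ^+ 2) in E'.
  have k0 : 0 <= k.
    rewrite /k; apply: divr_ge0; first exact: mulr_ge0 (ltW Hdt) G0.
    by apply: mulr_ge0 => //; exact: sqr_ge0.
  split; nra.
have main : forall n, 0 < Rs n /\ Rs n <= Rs 0%N.
  have R0 : 0 < Rs 0%N.
    by rewrite HR0 sqrtr_gt0; apply: lt_le_trans Hc0 (@energy_ge R d Omega lam c0 (phi 0%N) Hl).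
  elim=> [|n [IH1 IH2]]; first by split.
  have [a b] := step n IH1; split => //; exact: le_trans b IH2.
move=> n M.
have [a b] := step n (main n).1.
have [_ c] := main n.
split; first by split => //; split.
have S0 := HS n.+1.
have Sp : 0 < Num.sqrt (energy Omega lam c0 (phi n.+1)) by apply: lt_le_trans S0.
rewrite Hxi; split; first exact: divr_gt0.
rewrite /M.
have h1 : Rs n.+1 / Num.sqrt (energy Omega lam c0 (phi n.+1)) <= Rs n.+1 / Num.sqrt c0.
  rewrite ler_pdivrMr //. rewrite mulrAC. rewrite ler_pdivlMr //. rewrite ler_pM2l //.
have h2 : Rs n.+1 / Num.sqrt c0 <= Rs 0%N / Num.sqrt c0.
  rewrite ler_pM2r; last by rewrite invr_gt0.
  exact: (le_trans b c).
clear -h1 h2. exact: (le_trans h1 h2).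
Qed.
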